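(* Let $g,h$ be distinct formal letters (with $g\not\equiv h$, i.e. $h\ne g,g^{-1}$). For all $n\ge1$, the iterated commutator word $[g,h]_n$ contains none of the square words in $g$ and $h$ as a cyclic subword.
   Context: Iterated commutator words in the free group on $g,h$: $[g,h]_1:=gh^{-1}g^{-1}h$, and for $n\ge 2$, $[g,h]_n$ is the reduced form of $g\,[g,h]_{n-1}^{-1}\,g^{-1}\,[g,h]_{n-1}$. A cyclic permutation of a word $a_1\cdots a_n$ is a word $a_k\cdots a_na_1\cdots a_{k-1}$ for some $k\in[n]$. A word $u$ is a cyclic subword of $w$ if $u$ or $u^{-1}$ is a contiguous subword of some cyclic permutation of $w$. The square words in $g$ and $h$ are the words obtained from $ghgh$ and $gh^{-1}gh^{-1}$ by cyclic permutations and inversions, namely $ghgh$, $hghg$, $h^{-1}g^{-1}h^{-1}g^{-1}$, $g^{-1}h^{-1}g^{-1}h^{-1}$, $gh^{-1}gh^{-1}$, $h^{-1}gh^{-1}g$, $hg^{-1}hg^{-1}$, $g^{-1}hg^{-1}h$. *)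

(* Defs.v *)
From mathcomp Require Import all_boot.
Set Implicit Arguments. Unset Strict Implicit. Unset Printing Implicit Defensive.

(* A letter is (is_h, inverted): g = (false,false), g^-1 = (false,true),
   h = (true,false), h^-1 = (true,true).  Since g and h are distinct
   generators of a free group, h is neither g nor g^-1. *)
Definition letter := (bool * bool)%type.
Definition lg : letter := (false, false).
Definition lgi : letter := (false, true).
Definition lh : letter := (true, false).
Definition lhi : letter := (true, true).

Definition linv (x : letter) : letter := (x.1, ~~ x.2).

Definition winv (w : seq letter) : seq letter := rev (map linv w).

Definition push (x : letter) (s : seq letter) : seq letter :=
  match s with
  | y :: s' => if y == linv x then s' else x :: s
  | [::] => [:: x]
  end.

Definition reduce (w : seq letter) : seq letter := foldr push [::] w.

(* [g,h]_1 = g h^-1 g^-1 h ;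
   [g,h]_n = reduced form of g [g,h]_{n-1}^-1 g^-1 [g,h]_{n-1}  (n >= 2).
   comm 0 is an unused dummy value. *)
Fixpoint comm (n : nat) : seq letter :=
  match n with
  | 0 => [::]
  | S m => if m is 0 then [:: lg; lhi; lgi; lh]
           else reduce (lg :: winv (comm m) ++ lgi :: comm m)
  end.

(* Cyclic permutations of a_1...a_n: a_k...a_n a_1...a_{k-1}, k in [n],
   i.e. rot k w for k < size w.  u is a cyclic subword of w if u or u^-1 is
   a contiguous subword of some cyclic permutation of w. *)
Definition cyclic_subword (u w : seq letter) : Prop :=
  exists2 k, k < size w &
    (infix u (rot k w) \/ infix (winv u) (rot k w)).

Definition square_words : seq (seq letter) :=
  [:: [:: lg; lh; lg; lh];
      [:: lh; lg; lh; lg];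
      [:: lhi; lgi; lhi; lgi];
      [:: lgi; lhi; lgi; lhi];
      [:: lg; lhi; lg; lhi];
      [:: lhi; lg; lhi; lg];
      [:: lh; lgi; lh; lgi];
      [:: lgi; lh; lgi; lh]].

(* Main.v *)
Require Import Defs.
From mathcomp Require Import all_boot.
From mathcomp Require Import zify.

Record Inv (w : seq letter) : Prop := MkInv {
  inv4 : 4 %| size w; invpos : 0 < size w; inv0 : nth lg w 0 = lg;
  invp : forall i, i < size w -> (nth lg w i).1 = odd i;
  inv1 : forall i, i < size w -> i %% 4 = 1 -> nth lg w i = lhi;
  inv3 : forall i, i < size w -> i %% 4 = 3 -> nth lg w i = lh }.

Lemma foldr_push_alt (a t : seq letter) (o : nat) :
  (forall i, i < size (a ++ t) -> (nth lg (a ++ t) i).1 = odd (i + o)) ->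
  foldr push t a = a ++ t.
Proof.
elim: a o => [|x a IH] o H //=.
rewrite (IH o.+1); last first.
  by move=> i Hi; have := H i.+1 Hi; rewrite addSnnS.
case E: (a ++ t) => [|y s] //=.
have H0 := H 0 isT; have H1 := H 1.
rewrite /= E /= in H1; have {}H1 := H1 isT.
case: eqP => // Hy.
move: H0 H1; rewrite Hy /linv /= add0n.
by move=> ->; case: (odd o).
Qed.

Lemma step_red (c : seq letter) : Inv c ->
  (forall i, i < size (lg :: winv c ++ behead c) ->
     (nth lg (lg :: winv c ++ behead c) i).1 = odd i) ->
  reduce (lg :: winv c ++ lgi :: c) = lg :: winv c ++ behead c.
Proof.
move=> [_ Hpos H0 Hp _ _] Halt.
rewrite /reduce.
change (foldr push [::] ((lg :: winv c) ++ lgi :: c) = lg :: winv c ++ behead c).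
rewrite foldr_cat /=.
have Hc : foldr push [::] c = c.
  have := @foldr_push_alt c [::] 0; rewrite cats0; apply.
  by move=> i Hi; rewrite addn0 Hp.
rewrite Hc.
case: c Hpos H0 Hp Hc Halt => [|y c'] //= _ -> _ _ Halt.
rewrite eqxx.
have := @foldr_push_alt (lg :: winv (lg :: c')) c' 0; apply.
by move=> i Hi; rewrite addn0; apply: Halt.
Qed.

Lemma nth_new (c : seq letter) i : 0 < size c ->
  nth lg (lg :: winv c ++ behead c) i =
  if i == 0 then lg else
  if i <= size c then linv (nth lg c (size c - i))
  else nth lg c (i - size c).
Proof.
move=> Hs.
case: i => [|i] //=.
rewrite nth_cat /winv size_rev size_map.
case: ltnP => Hi.
  rewrite nth_rev ?size_map // (nth_map lg) //; lia.
rewrite nth_behead; congr nth; lia.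
Qed.

Lemma odd_eq i j : i %% 2 = j %% 2 -> odd i = odd j.
Proof. by rewrite !modn2; case: (odd i); case: (odd j). Qed.

Lemma step_inv (c : seq letter) : Inv c -> Inv (lg :: winv c ++ behead c).
Proof.
move=> [H4 Hpos H0 Hp H1 H3].
have Hsz : size (lg :: winv c ++ behead c) = (size c).*2.
  rewrite /= size_cat /winv size_rev size_map size_behead; lia.
move: H4 => /dvdnP [m Hm].
split; rewrite ?Hsz ?nth_new //.
- apply/dvdnP; exists (2 * m); lia.
- lia.
- move=> i Hi; rewrite nth_new //.
  case: eqP => [->//|Hi0].
  case: ifP => Hi2.
    by rewrite /linv /= Hp; [apply: odd_eq|]; lia.
  by rewrite Hp; [apply: odd_eq|]; lia.
- move=> i Hi Hi1; rewrite nth_new //.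
  case: eqP => [Hi0|Hi0]; first by lia.
  case: ifP => Hi2.
    by rewrite H3 //; lia.
  by rewrite H1 //; lia.
- move=> i Hi Hi1; rewrite nth_new //.
  case: eqP => [Hi0|Hi0]; first by lia.
  case: ifP => Hi2.
    by rewrite H1 //; lia.
  by rewrite H3 //; lia.
Qed.

Lemma commS n : comm n.+2 = reduce (lg :: winv (comm n.+1) ++ lgi :: comm n.+1).
Proof. by []. Qed.

Lemma comm_inv n : 1 <= n -> Inv (comm n).
Proof.
elim: n => [|[|n] IH] // _.
  split => // i Hi; do 4?[case: i Hi => [|i] Hi] => //.
have Hc := IH isT.
rewrite commS step_red //; first exact: step_inv.
exact (invp _ (step_inv _ Hc)).
Qed.

Lemma nth_rot_mod (w : seq letter) k j : 4 %| size w -> k < size w ->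
  j < size w -> exists q, [/\ q < size w, q %% 4 = (k + j) %% 4 &
     nth lg (rot k w) j = nth lg w q].
Proof.
move=> /dvdnP [m Hm] Hk Hj.
rewrite /rot nth_cat size_drop.
case: ltnP => Hj2.
  exists (k + j); split; [lia|by []|by rewrite nth_drop].
exists (j - (size w - k)); split; [lia|lia|].
by rewrite nth_take //; lia.
Qed.

Lemma no_square (w : seq letter) k a b : Inv w -> k < size w ->
  ~ infix [:: a; b; a; b] (rot k w).
Proof.
move=> [H4 _ _ _ H1 H3] Hk /infixP [s [s' E]].
have Hsz : size s + 4 <= size w.
  by have := size_rot k w; rewrite E !size_cat /= => <-; rewrite leq_add2l leq_addr.
have Hn t : t < 4 -> nth lg (rot k w) (size s + t) = nth lg [:: a; b; a; b] t.
  move=> Ht; rewrite E nth_cat.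
  have -> : (size s + t < size s) = false by rewrite ltnNge leq_addr.
  by rewrite addKn; move: Ht; case: t => [|[|[|[|t]]]].
have G t : t < 4 -> exists q, [/\ q < size w, q %% 4 = (k + size s + t) %% 4 &
      nth lg [:: a; b; a; b] t = nth lg w q].
  move=> Ht; rewrite -Hn //; rewrite -addnA; apply: nth_rot_mod => //; lia.
have [q0 [Q0 M0 E0]] := G 0 isT.
have [q1 [Q1 M1 E1]] := G 1 isT.
have [q2 [Q2 M2 E2]] := G 2 isT.
have [q3 [Q3 M3 E3]] := G 3 isT.
move: E0 E1 E2 E3 => /= E0 E1 E2 E3.
have : (k + size s) %% 4 < 4 by rewrite ltn_mod.
case Hr: ((k + size s) %% 4) => [|[|[|[|r]]]] // _.
- by move: E1 E3; rewrite H1 ?H3 //; try lia; move=> -> .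
- by move: E0 E2; rewrite H1 ?H3 //; try lia; move=> -> .
- by move: E1 E3; rewrite H3 ?H1 //; try lia; move=> -> .
- by move: E0 E2; rewrite H3 ?H1 //; try lia; move=> -> .
Qed.

Theorem lemma3p11 (n : nat) : 1 <= n ->
  forall u : seq letter, u \in square_words -> ~ cyclic_subword u (comm n).
Proof.
move=> Hn u Hu [k Hk Hi].
have HI := comm_inv n Hn.
move: Hu; rewrite /square_words !inE.
repeat (case/orP => [/eqP E|]; [subst u; case: Hi => Hi; exact: (no_square _ _ _ _ HI Hk Hi)|]).
move/eqP => E; subst u; case: Hi => Hi; exact: (no_square _ _ _ _ HI Hk Hi).
Qed.
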